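(* Let $K$ be a field of characteristic zero, $S=K[X_0,X_1,Y_0,Y_1]$ bigraded by $\deg X_i=(1,0)$, $\deg Y_i=(0,1)$. Let $\mathbb{Y}=\sum_{(i,j)\in D_{\mathbb{X}}} m_{ij}P_{ij}$ be a fat point scheme in $\mathbb{P}^1\times\mathbb{P}^1$ and let $\mathbb{V}=\sum_{(i,j)\in D_{\mathbb{X}}}(m_{ij}+1)P_{ij}$ be its thickening. Then the sequence of bigraded $R_{\mathbb{Y}}$-modules $$0\longrightarrow I_{\mathbb{Y}}/I_{\mathbb{V}}\longrightarrow R_{\mathbb{Y}}^2(-1,0)\oplus R_{\mathbb{Y}}^2(0,-1)\longrightarrow \Omega^1_{R_{\mathbb{Y}}/K}\longrightarrow 0$$ is exact, where the first map sends $F+I_{\mathbb{V}}$ ($F\in I_{\mathbb{Y}}$) to the class of $dF=\sum_{i}\frac{\partial F}{\partial X_i}dX_i+\sum_i\frac{\partial F}{\partial Y_i}dY_i$ in $\Omega^1_{S/K}/I_{\mathbb{Y}}\Omega^1_{S/K}\cong R_{\mathbb{Y}}^2(-1,0)\oplus R_{\mathbb{Y}}^2(0,-1)$ (basis $dX_0,dX_1,dY_0,dY_1$), and the second map sends $dX_0,dX_1,dY_0,dY_1$ to $dx_0,dx_1,dy_0,dy_1$.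
   Context: Points of $\mathbb{P}^1\times\mathbb{P}^1$ are $K$-rational. For a finite set $\mathbb{X}$ of distinct points, $\pi_1(\mathbb{X})=\{Q_1,\dots,Q_r\}$, $\pi_2(\mathbb{X})=\{R_1,\dots,R_t\}$, $P_{ij}=Q_i\times R_j$, $D_{\mathbb{X}}=\{(i,j)\mid P_{ij}\in\mathbb{X}\}$, $\wp_{ij}$ the (bihomogeneous prime) vanishing ideal of $P_{ij}$. For positive integers $m_{ij}$ the fat point scheme $\mathbb{Y}=\sum m_{ij}P_{ij}$ has ideal $I_{\mathbb{Y}}=\bigcap\wp_{ij}^{m_{ij}}$ and bihomogeneous coordinate ring $R_{\mathbb{Y}}=S/I_{\mathbb{Y}}$; $x_i,y_i$ denote the images of $X_i,Y_i$. $\Omega^1_{R_{\mathbb{Y}}/K}=J/J^2$ where $J$ is the kernel of multiplication $R_{\mathbb{Y}}\otimes_K R_{\mathbb{Y}}\to R_{\mathbb{Y}}$, bigraded with $\deg dx_i=(1,0)$, $\deg dy_i=(0,1)$. For a bigraded module $M$, $M(a,b)_{i,j}=M_{a+i,b+j}$. *)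

(* Defs.v *)
From HB Require Import structures.
From mathcomp Require Import all_boot all_order all_algebra.
From mathcomp Require Import mpoly.
Set Implicit Arguments. Unset Strict Implicit. Unset Printing Implicit Defensive.
Import Order.TTheory GRing.Theory.
Local Open Scope ring_scope.

Definition gen_ideal (R : comRingType) (P : R -> Prop) (x : R) : Prop :=
  exists s : seq (R * R), (forall p, p \in s -> P p.2) /\
                          x = \sum_(p <- s) p.1 * p.2.

Definition idealM (R : comRingType) (P Q : R -> Prop) : R -> Prop :=
  gen_ideal (fun x => exists a b, P a /\ Q b /\ x = a * b).
Definition idealX (R : comRingType) (P : R -> Prop) (k : nat) : R -> Prop :=
  iter k (idealM P) (fun _ => True).

Definition iX0 : 'I_4 := inord 0.
Definition iX1 : 'I_4 := inord 1.
Definition iY0 : 'I_4 := inord 2.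
Definition iY1 : 'I_4 := inord 3.

Definition bihomog (K : fieldType) (F : {mpoly K[4]}) : Prop :=
  exists a b : nat, forall mo, mo \in msupp F ->
     (mo iX0 + mo iX1)%N = a /\ (mo iY0 + mo iY1)%N = b.

Definition ptcoord (K : fieldType) (q r : K * K) (i : 'I_4) : K :=
  if i == iX0 then q.1 else if i == iX1 then q.2
  else if i == iY0 then r.1 else r.2.

Definition van_ideal (K : fieldType) (q r : K * K) : {mpoly K[4]} -> Prop :=
  gen_ideal (fun F => bihomog F /\ F.@[ptcoord q r] = 0).

Definition fat_ideal (K : fieldType) (r t : nat) (Q : 'I_r -> K * K)
  (R : 'I_t -> K * K) (D : {set 'I_r * 'I_t}) (mu : 'I_r -> 'I_t -> nat)
  (F : {mpoly K[4]}) : Prop :=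
  forall ij, ij \in D -> idealX (van_ideal (Q ij.1) (R ij.2)) (mu ij.1 ij.2) F.

(* S (x)_K S is modelled as K[X, X'] = {mpoly K[8]}: variable i of the first
   tensor factor is lshift 4 i, of the second factor rshift 4 i. *)
Definition embL (K : fieldType) (F : {mpoly K[4]}) : {mpoly K[4 + 4]} :=
  mmap (@mpolyC (4 + 4) K) (fun i => 'X_(lshift 4 i)) F.
Definition embR (K : fieldType) (F : {mpoly K[4]}) : {mpoly K[4 + 4]} :=
  mmap (@mpolyC (4 + 4) K) (fun i => 'X_(rshift 4 i)) F.
(* multiplication map S (x) S -> S, X_i (x) 1 |-> X_i, 1 (x) X_i |-> X_i *)
Definition diagmap (K : fieldType) (w : {mpoly K[4 + 4]}) : {mpoly K[4]} :=
  mmap (@mpolyC 4 K)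
    (fun k : 'I_(4 + 4) => 'X_(match split k with inl i => i | inr i => i end)) w.

(* Let I = I_Y.  R_Y (x) R_Y = K[X,X'] / N with N = (I(X)) + (I(X')).
   The preimage in K[X,X'] of J = ker(R_Y (x) R_Y -> R_Y): *)
Definition Jpre (K : fieldType) (I : {mpoly K[4]} -> Prop)
  (w : {mpoly K[4 + 4]}) : Prop := I (diagmap w).

(* Omega^1_{R_Y/K} = J/J^2 = Jpre / (Jpre^2 + N); an element w of Jpre
   represents zero in J/J^2 iff it lies in the ideal Jpre^2 + N. *)
Definition omega_zero (K : fieldType) (I : {mpoly K[4]} -> Prop)
  (w : {mpoly K[4 + 4]}) : Prop :=
  gen_ideal (fun x => (exists a b, Jpre I a /\ Jpre I b /\ x = a * b)
                   \/ (exists f, I f /\ x = embL f)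
                   \/ (exists f, I f /\ x = embR f)) w.

(* The second map R_Y^4 -> Omega^1: (G_i) |-> sum_i g_i dx_i, where
   dx_i = 1 (x) x_i - x_i (x) 1 and R_Y acts through the first factor. *)
Definition dmap (K : fieldType) (G : 'I_4 -> {mpoly K[4]}) : {mpoly K[4 + 4]} :=
  \sum_(i < 4) embL (G i) * ('X_(rshift 4 i) - 'X_(lshift 4 i)).

Definition dF (K : fieldType) (F : {mpoly K[4]}) : 'I_4 -> {mpoly K[4]} :=
  fun i => F^`M(i).

(* Main.v *)
Require Import Defs.
From HB Require Import structures.
From mathcomp Require Import all_boot all_order all_algebra.
From mathcomp Require Import mpoly.
From mathcomp Require Import ring zify.
Import GRing.Theory.
Local Open Scope ring_scope.
Set Implicit Arguments. Unset Strict Implicit. Unset Printing Implicit Defensive.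

Section Ideals.
Variable R : comRingType.
Implicit Types (P Q : R -> Prop).

Definition isIdeal (I : R -> Prop) :=
  [/\ I 0, forall x y, I x -> I y -> I (x + y) & forall c x, I x -> I (c * x)].

Lemma gi0 P : gen_ideal P 0.
Proof. by exists [::]; split => //; rewrite big_nil. Qed.

Lemma giD P x y : gen_ideal P x -> gen_ideal P y -> gen_ideal P (x + y).
Proof.
case=> [s [hs ->]] [t [ht ->]]; exists (s ++ t); split; last by rewrite big_cat.
by move=> p; rewrite mem_cat => /orP [/hs|/ht].
Qed.

Lemma giM P c x : gen_ideal P x -> gen_ideal P (c * x).
Proof.
case=> [s [hs ->]]; exists (map (fun p => (c * p.1, p.2)) s); split.
  by move=> p /mapP [p' /hs h ->].
by rewrite big_map mulr_sumr; apply: eq_bigr => p _ /=; rewrite mulrA.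
Qed.

Lemma gi_ideal P : isIdeal (gen_ideal P).
Proof. by split; [apply: gi0 | apply: giD | apply: giM]. Qed.

Lemma gi_gen P x : P x -> gen_ideal P x.
Proof. by move=> h; exists [:: (1, x)]; split; [move=> p; rewrite inE => /eqP -> | rewrite big_seq1 mul1r]. Qed.

Lemma gi_ind P (Phi : R -> Prop) : Phi 0 -> (forall x y, Phi x -> Phi y -> Phi (x + y)) ->
  (forall c g, P g -> Phi (c * g)) -> forall x, gen_ideal P x -> Phi x.
Proof.
move=> h0 hD hM x [s [hs ->]]; elim: s hs => [|p s IH] hs; first by rewrite big_nil.
rewrite big_cons; apply: hD; first by apply: hM; apply: hs; rewrite inE eqxx.
by apply: IH => p' hp'; apply: hs; rewrite inE hp' orbT.
Qed.

Lemma gi_sub P (I : R -> Prop) : isIdeal I -> (forall x, P x -> I x) ->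
  forall x, gen_ideal P x -> I x.
Proof. by case=> h0 hD hM hP; apply: gi_ind => // c g /hP; apply: hM. Qed.

Lemma gi_mono P Q : (forall x, P x -> Q x) -> forall x, gen_ideal P x -> gen_ideal Q x.
Proof. by move=> h; apply: gi_sub; [apply: gi_ideal | move=> x /h /gi_gen]. Qed.

Lemma idealN (I : R -> Prop) x : isIdeal I -> I x -> I (- x).
Proof. by case=> _ _ hM /(hM (-1)); rewrite mulN1r. Qed.

Lemma idealB (I : R -> Prop) x y : isIdeal I -> I x -> I y -> I (x - y).
Proof. by move=> hI hx hy; case: (hI) => _ hD _; apply: hD => //; apply: idealN. Qed.

Lemma idealMr (I : R -> Prop) x c : isIdeal I -> I x -> I (x * c).
Proof. by case=> _ _ hM hx; rewrite mulrC; apply: hM. Qed.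

Lemma idealD (I : R -> Prop) x y : isIdeal I -> I x -> I y -> I (x + y).
Proof. by case=> _ hD _; apply: hD. Qed.

Lemma idealMl (I : R -> Prop) x c : isIdeal I -> I x -> I (c * x).
Proof. by case=> _ _ hM; apply: hM. Qed.

Lemma ideal0 (I : R -> Prop) : isIdeal I -> I 0.
Proof. by case. Qed.

Lemma ideal_sum (I : R -> Prop) (T : Type) (s : seq T) (F : T -> R) :
  isIdeal I -> (forall t, I (F t)) -> I (\sum_(t <- s) F t).
Proof.
move=> hI hF; elim: s => [|t s IH]; first by rewrite big_nil; apply: ideal0.
by rewrite big_cons; apply: idealD.
Qed.

Lemma idealX_ideal P k : isIdeal (idealX P k).
Proof. case: k => [|k] /=; last by apply: gi_ideal. by split. Qed.

Lemma idealXS P k : idealX P k.+1 = idealM P (idealX P k).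
Proof. by []. Qed.

Lemma XM P k a b : P a -> idealX P k b -> idealX P k.+1 (a * b).
Proof. by move=> ha hb; rewrite idealXS; apply: gi_gen; exists a, b. Qed.

Lemma X_dec P k x : idealX P k.+1 x -> idealX P k x.
Proof.
elim: k x => [//|k IH] x.
by apply: gi_mono => y [a [b [ha [hb ->]]]]; exists a, b; split => //; split => //; apply: IH.
Qed.

End Ideals.
Lemma mpoly_gen_ind (n : nat) (R : comRingType) (P : {mpoly R[n]} -> Prop) :
  (forall c, P c%:MP) -> (forall i, P 'X_i) ->
  (forall p q, P p -> P q -> P (p + q)) -> (forall p q, P p -> P q -> P (p * q)) ->
  forall p, P p.
Proof.
move=> hC hX hD hM; apply: mpolyind.
  by rewrite -mpolyC0; apply: hC.
move=> c m p _ _ hp; apply: (hD) => //; rewrite -mul_mpolyC; apply: (hM) => //.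
rewrite mpolyXE_id; apply: (big_ind P) => //; first by rewrite -mpolyC1; apply: hC.
move=> i _; elim: (m i) => [|k IH]; first by rewrite expr0 -mpolyC1; apply: hC.
by rewrite exprS; apply: hM.
Qed.

Lemma deriv_idealX (n : nat) (R : comRingType) (P : {mpoly R[n]} -> Prop) i k x :
  idealX P k.+1 x -> idealX P k (x^`M(i)).
Proof.
elim: k x => [//|k IH] x; rewrite idealXS.
have hI := idealX_ideal P k.+1.
move: x; apply: (gi_ind (Phi := fun x => idealX P k.+1 x^`M(i))).
- by rewrite mderiv0; apply: ideal0.
- by move=> y z hy hz; rewrite mderivD; apply: idealD.
move=> c g [a [b [ha [hb ->]]]]; rewrite !mderivM mulrDr addrA.
apply: idealD => //; first apply: idealD => //.
- by apply: idealMl => //; apply: X_dec; apply: XM.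
- by rewrite mulrA; apply: idealMl => //; apply: idealMl.
- rewrite mulrA [c * a]mulrC -mulrA; apply: XM => //.
  by apply: idealMl; [apply: idealX_ideal | apply: IH].
Qed.

Lemma vX0 : nat_of_ord iX0 = 0%N. Proof. by rewrite /iX0 inordK. Qed.
Lemma vX1 : nat_of_ord iX1 = 1%N. Proof. by rewrite /iX1 inordK. Qed.
Lemma vY0 : nat_of_ord iY0 = 2%N. Proof. by rewrite /iY0 inordK. Qed.
Lemma vY1 : nat_of_ord iY1 = 3%N. Proof. by rewrite /iY1 inordK. Qed.
Definition vE := (vX0, vX1, vY0, vY1).
Lemma ord4_cases (i : 'I_4) : [\/ i = iX0, i = iX1, i = iY0 | i = iY1].
Proof. case: i => [[|[|[|[|k]]]] hk].
- by constructor 1; apply/val_inj; rewrite /= vX0.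
- by constructor 2; apply/val_inj; rewrite /= vX1.
- by constructor 3; apply/val_inj; rewrite /= vY0.
- by constructor 4; apply/val_inj; rewrite /= vY1.
- by [].
Qed.

Lemma big4 (T : Type) (idx : T) (op : Monoid.com_law idx) (f : 'I_4 -> T) :
  \big[op/idx]_(i < 4) f i = op (op (op (f iX0) (f iX1)) (f iY0)) (f iY1).
Proof.
rewrite !big_ord_recr big_ord0 /= Monoid.mul1m.
by congr (op (op (op (f _) (f _)) (f _)) (f _)); apply: val_inj; rewrite /= ?vE.
Qed.

Lemma mderivXU (n : nat) (R : comRingType) (i j : 'I_n) :
  ('X_j : {mpoly R[n]})^`M(i) = (j == i)%:R.
Proof.
rewrite mderivX mnm1E; case: eqP => [->|_]; last by rewrite scale0r.
have -> : (U_(i) - U_(i) = 0)%MM by apply/mnmP => k; rewrite mnmBE mnm0E subnn.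
by rewrite mpolyX0 scale1r.
Qed.

Lemma e01 : (iX0 == iX1) = false. Proof. by rewrite -val_eqE /= !vE. Qed.
Lemma e02 : (iX0 == iY0) = false. Proof. by rewrite -val_eqE /= !vE. Qed.
Lemma e03 : (iX0 == iY1) = false. Proof. by rewrite -val_eqE /= !vE. Qed.
Lemma e10 : (iX1 == iX0) = false. Proof. by rewrite -val_eqE /= !vE. Qed.
Lemma e12 : (iX1 == iY0) = false. Proof. by rewrite -val_eqE /= !vE. Qed.
Lemma e13 : (iX1 == iY1) = false. Proof. by rewrite -val_eqE /= !vE. Qed.
Lemma e20 : (iY0 == iX0) = false. Proof. by rewrite -val_eqE /= !vE. Qed.
Lemma e21 : (iY0 == iX1) = false. Proof. by rewrite -val_eqE /= !vE. Qed.
Lemma e23 : (iY0 == iY1) = false. Proof. by rewrite -val_eqE /= !vE. Qed.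
Lemma e30 : (iY1 == iX0) = false. Proof. by rewrite -val_eqE /= !vE. Qed.
Lemma e31 : (iY1 == iX1) = false. Proof. by rewrite -val_eqE /= !vE. Qed.
Lemma e32 : (iY1 == iY0) = false. Proof. by rewrite -val_eqE /= !vE. Qed.
Definition eqsE := (eqxx, e01, e02, e03, e10, e12, e13, e20, e21, e23, e30, e31, e32).

Section Point.
Variables (K : fieldType) (q r : K * K) (u0 u1 v0 v1 : K).
Hypotheses (hu : u0 * q.2 - u1 * q.1 = 1) (hv : v0 * r.2 - v1 * r.1 = 1).
Local Notation S := {mpoly K[4]}.
Definition Ul : S := (q.2)%:MP * 'X_iX0 - (q.1)%:MP * 'X_iX1.
Definition Vl : S := (r.2)%:MP * 'X_iY0 - (r.1)%:MP * 'X_iY1.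
Local Notation P := (van_ideal q r).

Lemma ptcE : (ptcoord q r iX0 = q.1) * (ptcoord q r iX1 = q.2) *
             (ptcoord q r iY0 = r.1) * (ptcoord q r iY1 = r.2).
Proof. by rewrite /ptcoord !eqsE. Qed.

Lemma P_ideal : isIdeal P.
Proof. exact: gi_ideal. Qed.

Lemma Ul_P : P Ul.
Proof.
apply: gi_gen; split; last first.
  by rewrite /Ul mevalB !mevalM !mevalC !mevalXU !ptcE mulrC subrr.
exists 1%N, 0%N => mo; rewrite mcoeff_msupp /Ul mcoeffB !mcoeffCM !mcoeffX.
case: (eqVneq U_(iX0)%MM mo) => [<-|_]; first by rewrite !mnm1E !eqsE.
case: (eqVneq U_(iX1)%MM mo) => [<-|_]; first by rewrite !mnm1E !eqsE.
by rewrite !mulr0 subrr eqxx.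
Qed.

Lemma Vl_P : P Vl.
Proof.
apply: gi_gen; split; last first.
  by rewrite /Vl mevalB !mevalM !mevalC !mevalXU !ptcE mulrC subrr.
exists 0%N, 1%N => mo; rewrite mcoeff_msupp /Vl mcoeffB !mcoeffCM !mcoeffX.
case: (eqVneq U_(iY0)%MM mo) => [<-|_]; first by rewrite !mnm1E !eqsE.
case: (eqVneq U_(iY1)%MM mo) => [<-|_]; first by rewrite !mnm1E !eqsE.
by rewrite !mulr0 subrr eqxx.
Qed.

Definition DU (F : S) := u0%:MP * F^`M(iX0) + u1%:MP * F^`M(iX1).
Definition DV (F : S) := v0%:MP * F^`M(iY0) + v1%:MP * F^`M(iY1).
Definition T (F : S) := Ul * DU F + Vl * DV F.

Lemma T_add F G : T (F + G) = T F + T G.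
Proof. rewrite /T /DU /DV !mderivD; ring. Qed.

Lemma T_mul F G : T (F * G) = T F * G + F * T G.
Proof. rewrite /T /DU /DV !mderivM; ring. Qed.

Lemma T0 : T 0 = 0.
Proof. by rewrite /T /DU /DV !mderiv0 !mulr0 !addr0 !mulr0 addr0. Qed.

Lemma T_Ul : T Ul = Ul.
Proof.
rewrite /T /DU /DV; transitivity (Ul * (u0 * q.2 - u1 * q.1)%:MP); last by rewrite hu mulr1.
rewrite /Ul !mderivB !mderiv_mulC !mderivXU !eqsE !rmorphB !rmorphM /=; ring.
Qed.

Lemma T_Vl : T Vl = Vl.
Proof.
rewrite /T /DU /DV; transitivity (Vl * (v0 * r.2 - v1 * r.1)%:MP); last by rewrite hv mulr1.
rewrite /Vl !mderivB !mderiv_mulC !mderivXU !eqsE !rmorphB !rmorphM /=; ring.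
Qed.

Lemma T_P F : P (T F).
Proof.
apply: idealD; first exact: P_ideal.
- by apply: idealMr; [exact: P_ideal | exact: Ul_P].
- by apply: idealMr; [exact: P_ideal | exact: Vl_P].
Qed.

Lemma T_Xm m F : (forall i, idealX P m (F^`M(i))) -> idealX P m.+1 (T F).
Proof.
move=> hd; have hI := idealX_ideal P m; have hI1 := idealX_ideal P m.+1.
rewrite /T /DU /DV; apply: (idealD hI1); apply: XM; try exact: Ul_P; try exact: Vl_P.
- by apply: (idealD hI); apply: (idealMl _ hI).
- by apply: (idealD hI); apply: (idealMl _ hI).
Qed.

Definition lX : S := (- u1)%:MP * 'X_iX0 + u0%:MP * 'X_iX1.
Definition lY : S := (- v1)%:MP * 'X_iY0 + v0%:MP * 'X_iY1.
Definition ssig (i : 'I_4) : S :=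
  (ptcoord q r i)%:MP * (if (i == iX0) || (i == iX1) then lX else lY).
Definition sig (F : S) : S := mmap (@mpolyC 4 K) ssig F.

Lemma sig_claim1 F : exists g h, F - sig F = Ul * g + Vl * h.
Proof.
elim/mpoly_gen_ind: F.
- by move=> c; exists 0, 0; rewrite /sig mmapC subrr !mulr0 addr0.
- move=> i; rewrite /sig mmapX mmap1U /ssig.
  case: (ord4_cases i) => ->; rewrite !eqsE !ptcE /=.
  + exists u0%:MP, 0; apply/eqP; rewrite -subr_eq0; apply/eqP.
    transitivity ('X_iX0 * (1 - (u0 * q.2 - u1 * q.1)%:MP)); last by rewrite hu mpolyC1 subrr mulr0.
    rewrite /lX /Ul !rmorphB !rmorphM /= !rmorphN /=; ring.
  + exists u1%:MP, 0; apply/eqP; rewrite -subr_eq0; apply/eqP.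
    transitivity ('X_iX1 * (1 - (u0 * q.2 - u1 * q.1)%:MP)); last by rewrite hu mpolyC1 subrr mulr0.
    rewrite /lX /Ul !rmorphB !rmorphM /= !rmorphN /=; ring.
  + exists 0, v0%:MP; apply/eqP; rewrite -subr_eq0; apply/eqP.
    transitivity ('X_iY0 * (1 - (v0 * r.2 - v1 * r.1)%:MP)); last by rewrite hv mpolyC1 subrr mulr0.
    rewrite /lY /Vl !rmorphB !rmorphM /= !rmorphN /=; ring.
  + exists 0, v1%:MP; apply/eqP; rewrite -subr_eq0; apply/eqP.
    transitivity ('X_iY1 * (1 - (v0 * r.2 - v1 * r.1)%:MP)); last by rewrite hv mpolyC1 subrr mulr0.
    rewrite /lY /Vl !rmorphB !rmorphM /= !rmorphN /=; ring.
- move=> F G [g1 [h1 e1]] [g2 [h2 e2]]; exists (g1 + g2), (h1 + h2).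
  rewrite /sig rmorphD /= -/(sig F) -/(sig G).
  have -> : sig F = F - (Ul * g1 + Vl * h1) by rewrite -e1; ring.
  have -> : sig G = G - (Ul * g2 + Vl * h2) by rewrite -e2; ring.
  ring.
- move=> F G [g1 [h1 e1]] [g2 [h2 e2]].
  exists (g1 * G + sig F * g2), (h1 * G + sig F * h2).
  rewrite /sig rmorphM /= -/(sig F) -/(sig G).
  have -> : sig G = G - (Ul * g2 + Vl * h2) by rewrite -e2; ring.
  have eF : F = sig F + (Ul * g1 + Vl * h1) by rewrite -e1; ring.
  rewrite [in X in X - _]eF; ring.
Qed.

Lemma sig_mmap1 (mo : 'X_{1..4}) A B : (mo iX0 + mo iX1)%N = A -> (mo iY0 + mo iY1)%N = B ->
  mmap1 ssig mo = (\prod_(i < 4) (ptcoord q r i) ^+ (mo i))%:MP * (lX ^+ A * lY ^+ B).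
Proof.
move=> hA hB; rewrite /mmap1 /ssig.
rewrite (eq_bigr (fun i => ((ptcoord q r i) ^+ (mo i))%:MP *
   (if (i == iX0) || (i == iX1) then lX else lY) ^+ mo i)); last first.
  by move=> i _; rewrite exprMn rmorphXn.
rewrite big_split /= rmorph_prod; congr (_ * _).
rewrite big4 /= !eqsE /= -hA -hB !exprD.
by rewrite mulrA.
Qed.

Lemma sig_zero F : bihomog F -> F.@[ptcoord q r] = 0 -> sig F = 0.
Proof.
move=> [A [B hAB]] h0; rewrite /sig /mmap.
transitivity (\sum_(mo <- msupp F) (F@_mo)%:MP *
   ((\prod_(i < 4) (ptcoord q r i) ^+ (mo i))%:MP * (lX ^+ A * lY ^+ B))).
  by apply: eq_big_seq => mo hmo; case: (hAB mo hmo) => h1 h2; rewrite (sig_mmap1 h1 h2).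
rewrite (eq_bigr (fun mo => (F@_mo * \prod_(i < 4) (ptcoord q r i) ^+ (mo i))%:MP
   * (lX ^+ A * lY ^+ B))); last by move=> mo _; rewrite rmorphM mulrA.
by rewrite -mulr_suml -rmorph_sum -mevalE h0 rmorph0 mul0r.
Qed.

Lemma L0 F : bihomog F -> F.@[ptcoord q r] = 0 -> exists g h, F = Ul * g + Vl * h.
Proof.
move=> hb h0; case: (sig_claim1 F) => g [h e]; exists g, h.
by rewrite -e (sig_zero hb h0) subr0.
Qed.

Lemma L1 F : P F -> exists g h, F = Ul * g + Vl * h.
Proof.
move: F; apply: (gi_ind (Phi := fun F => exists g h, F = Ul * g + Vl * h)).
- by exists 0, 0; rewrite !mulr0 addr0.
- by move=> x y [g1 [h1 ->]] [g2 [h2 ->]]; exists (g1 + g2), (h1 + h2); ring.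
- move=> c x [hb h0]; case: (L0 hb h0) => g [h ->]; exists (c * g), (c * h); ring.
Qed.

Lemma claimC m G : idealX P m G -> idealX P m.+1 (T G - m%:R * G).
Proof.
elim: m G => [|m IH] G.
  move=> _; rewrite mul0r subr0 /T.
  apply: (idealD (idealX_ideal P 1)); apply: XM => //; [exact: Ul_P | exact: Vl_P].
have hI2 := idealX_ideal P m.+2; have hI1 := idealX_ideal P m.+1.
rewrite idealXS; move: G.
apply: (gi_ind (Phi := fun G => idealX P m.+2 (T G - m.+1%:R * G))).
- by rewrite T0 mulr0 subr0; apply: ideal0.
- move=> x y hx hy; rewrite T_add.
  have -> : T x + T y - m.+1%:R * (x + y) = (T x - m.+1%:R * x) + (T y - m.+1%:R * y) by ring.
  by apply: idealD.
move=> c g [a [b [ha [hb ->]]]].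
case: (L1 ha) => g1 [h1 ea].
have -> : T (c * (a * b)) - m.+1%:R * (c * (a * b)) =
   T c * (a * b) + c * ((Ul * (T g1 * b) + Vl * (T h1 * b)) + a * (T b - m%:R * b)).
  rewrite !T_mul ea !T_add !T_mul T_Ul T_Vl; ring.
apply: (idealD hI2); first by apply: XM; [exact: T_P | exact: XM].
apply: (idealMl _ hI2); apply: (idealD hI2); last by apply: XM => //; apply: IH.
apply: (idealD hI2); apply: XM; try exact: Ul_P; try exact: Vl_P; apply: XM => //; exact: T_P.
Qed.

Lemma point_step m F : (m%:R : K) != 0 -> idealX P m F ->
  (forall i, idealX P m (F^`M(i))) -> idealX P m.+1 F.
Proof.
move=> hm hF hd; have hI1 := idealX_ideal P m.+1.
have h1 : idealX P m.+1 (m%:R * F).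
  have -> : m%:R * F = T F - (T F - m%:R * F) by ring.
  by apply: (idealB hI1); [apply: T_Xm | apply: claimC].
have -> : F = ((m%:R : K)^-1)%:MP * (m%:R * F).
  by rewrite -mpolyC_nat mulrA -rmorphM mulVf // rmorph1 mul1r.
exact: (idealMl _ hI1).
Qed.

End Point.

Section Tensor.
Variable K : fieldType.
Local Notation S := {mpoly K[4]}.
Local Notation S8 := {mpoly K[4 + 4]}.

Definition ee (i : 'I_4) : S8 := 'X_(rshift 4 i) - 'X_(lshift 4 i).
Definition dl (i : 'I_4) (w : S8) : S := diagmap (w^`M(rshift 4 i)).

Lemma embLD (F G : S) : embL (F + G) = embL F + embL G. Proof. exact: rmorphD. Qed.
Lemma embLM (F G : S) : embL (F * G) = embL F * embL G. Proof. exact: rmorphM. Qed.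
Lemma embLC (c : K) : embL (c%:MP : S) = c%:MP. Proof. exact: mmapC. Qed.
Lemma embLX (i : 'I_4) : embL ('X_i : S) = 'X_(lshift 4 i). Proof. by rewrite /embL mmapX mmap1U. Qed.
Lemma embL1 : embL (1 : S) = 1. Proof. exact: rmorph1. Qed.
Lemma embL0 : embL (0 : S) = 0. Proof. exact: rmorph0. Qed.
Lemma embRD (F G : S) : embR (F + G) = embR F + embR G. Proof. exact: rmorphD. Qed.
Lemma embRM (F G : S) : embR (F * G) = embR F * embR G. Proof. exact: rmorphM. Qed.
Lemma embRC (c : K) : embR (c%:MP : S) = c%:MP. Proof. exact: mmapC. Qed.
Lemma embRX (i : 'I_4) : embR ('X_i : S) = 'X_(rshift 4 i). Proof. by rewrite /embR mmapX mmap1U. Qed.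
Lemma dgD (w v : S8) : diagmap (w + v) = diagmap w + diagmap v. Proof. exact: rmorphD. Qed.
Lemma dgB (w v : S8) : diagmap (w - v) = diagmap w - diagmap v. Proof. exact: rmorphB. Qed.
Lemma dgM (w v : S8) : diagmap (w * v) = diagmap w * diagmap v. Proof. exact: rmorphM. Qed.
Lemma dgC (c : K) : diagmap (c%:MP : S8) = c%:MP. Proof. exact: mmapC. Qed.
Lemma dg0 : diagmap (0 : S8) = 0. Proof. exact: rmorph0. Qed.
Lemma dgn (b : bool) : diagmap (b%:R : S8) = b%:R. Proof. exact: rmorph_nat. Qed.
Lemma dg_sum (s : seq 'I_4) (f : 'I_4 -> S8) :
  diagmap (\sum_(i <- s) f i) = \sum_(i <- s) diagmap (f i). Proof. exact: rmorph_sum. Qed.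
Lemma embL_sum (s : seq 'I_4) (f : 'I_4 -> S) :
  embL (\sum_(i <- s) f i) = \sum_(i <- s) embL (f i). Proof. exact: rmorph_sum. Qed.
Lemma dgXl (i : 'I_4) : diagmap ('X_(lshift 4 i) : S8) = 'X_i.
Proof. by rewrite /diagmap mmapX mmap1U (unsplitK (inl _ i)). Qed.
Lemma dgXr (i : 'I_4) : diagmap ('X_(rshift 4 i) : S8) = 'X_i.
Proof. by rewrite /diagmap mmapX mmap1U (unsplitK (inr _ i)). Qed.

Lemma lr_neq (i j : 'I_4) : (lshift 4 j == rshift 4 i) = false.
Proof. apply/negbTE; rewrite -val_eqE /=; have := ltn_ord j; lia. Qed.
Lemma rr_eq (i j : 'I_4) : (rshift 4 j == rshift 4 i) = (j == i).
Proof. by rewrite -val_eqE /= eqn_add2l val_eqE. Qed.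

Lemma diag_embL (F : S) : diagmap (embL F) = F.
Proof.
elim/mpoly_gen_ind: F.
- by move=> c; rewrite embLC dgC.
- by move=> i; rewrite embLX dgXl.
- by move=> F G h1 h2; rewrite embLD dgD h1 h2.
- by move=> F G h1 h2; rewrite embLM dgM h1 h2.
Qed.

Lemma diag_embR (F : S) : diagmap (embR F) = F.
Proof.
elim/mpoly_gen_ind: F.
- by move=> c; rewrite embRC dgC.
- by move=> i; rewrite embRX dgXr.
- by move=> F G h1 h2; rewrite embRD dgD h1 h2.
- by move=> F G h1 h2; rewrite embRM dgM h1 h2.
Qed.

Lemma dE_embL i (F : S) : (embL F)^`M(rshift 4 i) = 0.
Proof.
elim/mpoly_gen_ind: F.
- by move=> c; rewrite embLC mderivC.
- by move=> j; rewrite embLX mderivXU lr_neq.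
- by move=> F G h1 h2; rewrite embLD mderivD h1 h2 addr0.
- by move=> F G h1 h2; rewrite embLM mderivM h1 h2 mulr0 mul0r addr0.
Qed.

Lemma dl_embL i (F : S) : dl i (embL F) = 0.
Proof. by rewrite /dl dE_embL dg0. Qed.

Lemma dl_mul i (a b : S8) : dl i (a * b) = diagmap a * dl i b + diagmap b * dl i a.
Proof. rewrite /dl mderivM dgD !dgM; ring. Qed.

Lemma dl_add i (a b : S8) : dl i (a + b) = dl i a + dl i b.
Proof. by rewrite /dl mderivD dgD. Qed.

Lemma dl0 i : dl i 0 = 0.
Proof. by rewrite /dl mderiv0 dg0. Qed.

Lemma dl_sum i (s : seq 'I_4) (f : 'I_4 -> S8) :
  dl i (\sum_(j <- s) f j) = \sum_(j <- s) dl i (f j).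
Proof.
elim: s => [|j s IH]; first by rewrite !big_nil dl0.
by rewrite !big_cons dl_add IH.
Qed.

Lemma dl_embR i (F : S) : dl i (embR F) = F^`M(i).
Proof.
elim/mpoly_gen_ind: F.
- by move=> c; rewrite embRC /dl !mderivC dg0.
- by move=> j; rewrite embRX /dl !mderivXU rr_eq dgn.
- by move=> F G h1 h2; rewrite embRD dl_add h1 h2 mderivD.
- by move=> F G h1 h2; rewrite embRM dl_mul h1 h2 !diag_embR mderivM; ring.
Qed.

Lemma dl_ee i j : dl i (ee j) = (j == i)%:R.
Proof. by rewrite /dl /ee mderivB !mderivXU rr_eq lr_neq dgB !dgn subr0. Qed.

Lemma dg_ee j : diagmap (ee j) = 0.
Proof. by rewrite /ee dgB dgXl dgXr subrr. Qed.

Definition Gam (w : S8) : S8 :=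
  w - embL (diagmap w) - \sum_(i < 4) embL (dl i w) * ee i.

Definition Zker (x : S8) := exists a b, diagmap a = 0 /\ diagmap b = 0 /\ x = a * b.

Lemma Gam_ok w : gen_ideal Zker (Gam w).
Proof.
have hI := gi_ideal Zker.
elim/mpoly_gen_ind: w.
- move=> c; rewrite /Gam dgC embLC subrr big1 ?subr0; first exact: gi0.
  move=> i _.
  by rewrite /dl mderivC dg0 embL0 mul0r.
- move=> k; rewrite -(splitK k); case: (split k) => j /=.
  + rewrite /Gam dgXl embLX subrr big1 ?subr0; first exact: gi0.
    move=> i _.
    by rewrite /dl mderivXU lr_neq dgn embL0 mul0r.
  + rewrite /Gam dgXr embLX (bigD1 j) //= big1 ?addr0; last first.
      by move=> i /negbTE hij; rewrite /dl mderivXU rr_eq eq_sym hij dgn embL0 mul0r.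
    rewrite /dl mderivXU rr_eq eqxx dgn /= embL1 mul1r /ee subrr.
    exact: gi0.
- move=> x y hx hy.
  have -> : Gam (x + y) = Gam x + Gam y.
    rewrite /Gam dgD embLD.
    rewrite (eq_bigr (fun i => embL (dl i x) * ee i + embL (dl i y) * ee i)); last first.
      by move=> i _; rewrite dl_add embLD mulrDl.
    rewrite big_split /=.
    set a1 := \sum_(i < 4) _; set a2 := \sum_(i < 4) _; set a3 := embL _; set a4 := embL _.
    by clearbody a1 a2 a3 a4; ring.
  exact: (giD hx hy).
- move=> x y hx hy.
  set S1 := \sum_(i < 4) embL (dl i x) * ee i.
  set S2 := \sum_(i < 4) embL (dl i y) * ee i.
  have hS : \sum_(i < 4) embL (dl i (x * y)) * ee i =
            embL (diagmap x) * S2 + embL (diagmap y) * S1.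
    rewrite /S1 /S2 !mulr_sumr -big_split /=; apply: eq_bigr => i _.
    by rewrite dl_mul embLD !embLM mulrDl !mulrA.
  have -> : Gam (x * y) = Gam x * embL (diagmap y) + embL (diagmap x) * Gam y +
                (x - embL (diagmap x)) * (y - embL (diagmap y)).
    rewrite /Gam hS dgM embLM -/S1 -/S2.
    set A1 := embL (diagmap x); set A2 := embL (diagmap y).
    by clearbody S1 S2 A1 A2; ring.
  apply: giD; first apply: giD.
  + by apply: (idealMr _ hI).
  + exact: giM.
  + by apply: gi_gen; do 2 eexists; split; [|split; [|reflexivity]];
      rewrite dgB diag_embL subrr.
Qed.

End Tensor.

Lemma unit_pair (K : fieldType) (q : K * K) : q != (0, 0) ->
  exists u0 u1, u0 * q.2 - u1 * q.1 = 1.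
Proof.
case: q => a b /= hq.
have [ha|ha] := eqVneq a 0.
  have hb : b != 0 by apply: contraNneq hq => hb; rewrite ha hb.
  by exists b^-1, 0; rewrite mul0r subr0 mulVf.
by exists 0, (- a^-1); rewrite mul0r sub0r mulNr opprK mulVf.
Qed.

Lemma fat_ideal_ideal (K : fieldType) r t (Q : 'I_r -> K * K) (R : 'I_t -> K * K) D mu :
  isIdeal (fat_ideal Q R D mu).
Proof.
split.
- by move=> ij _; apply: ideal0; apply: idealX_ideal.
- by move=> x y hx hy ij h; apply: idealD; [apply: idealX_ideal | apply: hx | apply: hy].
- by move=> c x hx ij h; apply: idealMl; [apply: idealX_ideal | apply: hx].
Qed.

Section Final.
Variable K : fieldType.
Variable I : {mpoly K[4]} -> Prop.
Hypothesis hI : isIdeal I.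

Lemma om_ideal : isIdeal (omega_zero I).
Proof. exact: gi_ideal. Qed.

Lemma om_L f : I f -> omega_zero I (embL f).
Proof. by move=> h; apply: gi_gen; right; left; exists f. Qed.

Lemma om_R f : I f -> omega_zero I (embR f).
Proof. by move=> h; apply: gi_gen; right; right; exists f. Qed.

Lemma om_Zker w : gen_ideal (@Zker K) w -> omega_zero I w.
Proof.
rewrite /omega_zero.
apply: gi_mono.
move=> x.
rewrite /Zker.
move=> -[a [b [ha [hb ->]]]].
left; exists a, b.
by rewrite /Jpre ha hb; split; [apply: ideal0 | split; [apply: ideal0 |]].
Qed.

Lemma dmapE (G : 'I_4 -> {mpoly K[4]}) : dmap G = \sum_(j < 4) embL (G j) * ee K j.
Proof. by []. Qed.

Lemma dl_dmap i (G : 'I_4 -> {mpoly K[4]}) : dl i (dmap G) = G i.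
Proof.
rewrite dmapE dl_sum (bigD1 i) //= big1 ?addr0.
  by rewrite dl_mul diag_embL dl_ee eqxx dg_ee mul0r addr0 mulr1.
by move=> j /negbTE hj; rewrite dl_mul diag_embL dl_ee hj dg_ee mul0r addr0 mulr0.
Qed.

Lemma part3 (G : 'I_4 -> {mpoly K[4]}) : (forall i, I (G i)) -> omega_zero I (dmap G).
Proof.
move=> hG; rewrite dmapE; apply: ideal_sum; first exact: om_ideal.
by move=> j; apply: (idealMr _ om_ideal); apply: om_L.
Qed.

Lemma part5 (F : {mpoly K[4]}) : I F -> omega_zero I (dmap (dF F)).
Proof.
move=> hF.
have -> : dmap (dF F) = embR F - embL F - Gam (embR F).
  rewrite /Gam diag_embR dmapE (eq_bigr (fun i => embL (dl i (embR F)) * ee K i)); last first.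
    by move=> i _; rewrite dl_embR.
  set s := \sum_(i < 4) _; clearbody s; ring.
apply: (idealB om_ideal); last by apply: om_Zker; apply: Gam_ok.
by apply: (idealB om_ideal); [apply: om_R | apply: om_L].
Qed.

Lemma part7 w : Jpre I w -> exists G : 'I_4 -> {mpoly K[4]}, omega_zero I (w - dmap G).
Proof.
move=> hw; exists (fun i => dl i w).
have -> : w - dmap (fun i => dl i w) = embL (diagmap w) + Gam w.
  rewrite /Gam dmapE; set s := \sum_(i < 4) _; clearbody s; ring.
apply: (idealD om_ideal); first exact: om_L.
by apply: om_Zker; apply: Gam_ok.
Qed.

Lemma mid w : omega_zero I w -> exists F, I F /\ forall i, I (dl i w - F^`M(i)).
Proof.
move: w; apply: (gi_ind (Phi := fun w => exists F, I F /\ forall i, I (dl i w - F^`M(i)))).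
- exists 0; split; first exact: ideal0.
  by move=> i; rewrite dl0 mderiv0 subr0; apply: ideal0.
- move=> x y [F1 [h1 e1]] [F2 [h2 e2]]; exists (F1 + F2); split; first exact: (idealD hI).
  move=> i; rewrite dl_add mderivD.
  have -> : dl i x + dl i y - (F1^`M(i) + F2^`M(i)) = (dl i x - F1^`M(i)) + (dl i y - F2^`M(i)) by ring.
  exact: (idealD hI).
move=> c g [[a [b [ha [hb ->]]]]|[[f [hf ->]]|[f [hf ->]]]].
- exists 0; split; first exact: ideal0.
  move=> i; rewrite mderiv0 subr0 !dl_mul dgM.
  rewrite /Jpre in ha hb.
  apply: (idealD hI); last by apply: (idealMr _ hI); apply: (idealMr _ hI).
  apply: (idealMl _ hI); apply: (idealD hI); exact: (idealMr _ hI).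
- exists 0; split; first exact: ideal0.
  move=> i; rewrite mderiv0 subr0 dl_mul dl_embL diag_embL mulr0 add0r.
  exact: (idealMr _ hI).
- exists (diagmap c * f); split; first exact: (idealMl _ hI).
  move=> i; rewrite dl_mul dl_embR diag_embR mderivM.
  have -> : diagmap c * f^`M(i) + f * dl i c - ((diagmap c)^`M(i) * f + diagmap c * f^`M(i))
     = f * (dl i c - (diagmap c)^`M(i)) by ring.
  exact: (idealMr _ hI).
Qed.

Lemma part6 (G : 'I_4 -> {mpoly K[4]}) : omega_zero I (dmap G) -> exists2 F, I F & forall i, I (G i - dF F i).
Proof.
by case/mid => F [hF e]; exists F => // i; rewrite -(dl_dmap i G); apply: e.
Qed.

End Final.

Theorem theorem3p5 (K : fieldType) (charK0 : [pchar K] =i pred0)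
  (r t : nat) (Q : 'I_r -> K * K) (R : 'I_t -> K * K)
  (hQ0 : forall i, Q i != (0, 0))
  (hQd : forall i i', i != i' -> (Q i).1 * (Q i').2 != (Q i).2 * (Q i').1)
  (hR0 : forall j, R j != (0, 0))
  (hRd : forall j j', j != j' -> (R j).1 * (R j').2 != (R j).2 * (R j').1)
  (D : {set 'I_r * 'I_t})
  (hD1 : forall i, exists j, (i, j) \in D)
  (hD2 : forall j, exists i, (i, j) \in D)
  (m : 'I_r -> 'I_t -> nat) (hm : forall i j, (i, j) \in D -> (0 < m i j)%N) :
  let IY := fat_ideal Q R D m in
  let IV := fat_ideal Q R D (fun i j => (m i j).+1) in
  (* I_V is contained in I_Y, so I_Y/I_V makes sense *)
      (forall F, IV F -> IY F) /\
      (* the first map is well defined *)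
      (forall F, IV F -> forall i, IY (dF F i)) /\
      (* the second map is well defined *)
      (forall G : 'I_4 -> {mpoly K[4]}, (forall i, IY (G i)) ->
          omega_zero IY (dmap G)) /\
      (* exactness at I_Y/I_V (injectivity) *)
      (forall F, IY F -> (forall i, IY (dF F i)) -> IV F) /\
      (* the composite is zero *)
      (forall F, IY F -> omega_zero IY (dmap (dF F))) /\
      (* exactness in the middle *)
      (forall G : 'I_4 -> {mpoly K[4]}, omega_zero IY (dmap G) ->
          exists2 F, IY F & forall i, IY (G i - dF F i)) /\
      (* exactness at Omega^1 (surjectivity) *)
      (forall w, Jpre IY w -> exists G : 'I_4 -> {mpoly K[4]},
          omega_zero IY (w - dmap G)).
Proof.
move=> IY IV.
have hIY : isIdeal IY by apply: fat_ideal_ideal.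
split; first by move=> F hF ij hij; apply: X_dec; apply: hF.
split; first by move=> F hF i ij hij; apply: deriv_idealX; apply: hF.
split; first exact: part3.
split.
  move=> F hF hd [i j] hij.
  have [u0 [u1 hu]] := unit_pair (hQ0 i).
  have [v0 [v1 hv]] := unit_pair (hR0 j).
  apply: (point_step hu hv) => /=.
  - by move/pcharf0P: charK0 => ->; rewrite -lt0n; apply: hm.
  - exact: (hF (i, j) hij).
  - by move=> k; apply: (hd k (i, j) hij).
split; first exact: part5.
split; first exact: part6.
exact: part7.
Qed.
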